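(* Let $\alpha\in(0,1/2)$, $p_0=P(Y=1\mid D=0)$, $p_1=P(Y=1\mid D=1)$. In the binary model, the set $\{-1,1\}$ is a valid $(1-\alpha)$ prediction set given the observed data if and only if $p_1-p_0\ge1-\alpha$ or $p_0-p_1\ge1-\alpha$; in the first case $\{1\}$, and in the second case $\{-1\}$, is also a valid $(1-\alpha)$ prediction set given the observed data.
   Context: Binary treatment/outcome model: treatment $D\in\{0,1\}$ randomized; $Y_0,Y_1\in\{0,1\}$ potential outcomes; $\mathrm{ITE}=Y_1-Y_0\in\{-1,0,1\}$. A joint distribution of $(Y_0,Y_1)$ is compatible with the observed data if $P(Y_0=1)=p_0$ and $P(Y_1=1)=p_1$. A set $S$ is a valid $(1-\alpha)$ prediction set given the observed data if $P(Y_1-Y_0\in S)\ge1-\alpha$ for every compatible joint distribution. *)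

(* Defs.v *)
From HB Require Import structures.
From mathcomp Require Import all_boot all_order all_algebra.
Set Implicit Arguments. Unset Strict Implicit. Unset Printing Implicit Defensive.
Import Order.TTheory GRing.Theory Num.Theory.
Local Open Scope ring_scope.

(* Potential outcomes (Y0, Y1) take values in {0,1}, encoded as bool
   (false = 0, true = 1).  A joint distribution of (Y0,Y1) is a probability
   mass function q on bool * bool, where the first component is Y0 and the
   second is Y1. *)

Definition ite (y0 y1 : bool) : int := (Posz y1 - Posz y0)%R.

Definition is_pmf (R : realFieldType) (q : bool * bool -> R) : Prop :=
  (forall y, 0 <= q y) /\ \sum_(y : bool * bool) q y = 1.

Definition compatible (R : realFieldType) (p0 p1 : R) (q : bool * bool -> R) : Prop :=
  is_pmf q /\ \sum_(y : bool * bool | y.1) q y = p0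
           /\ \sum_(y : bool * bool | y.2) q y = p1.

Definition prob_ite (R : realFieldType) (q : bool * bool -> R) (S : seq int) : R :=
  \sum_(y : bool * bool | ite y.1 y.2 \in S) q y.

Definition valid_pred_set (R : realFieldType) (alpha p0 p1 : R) (S : seq int) : Prop :=
  forall q : bool * bool -> R, compatible p0 p1 q -> 1 - alpha <= prob_ite q S.

(* Main.v *)
Require Import Defs.
From mathcomp Require Import all_boot all_order all_algebra.
From mathcomp Require Import ring lra.
Import Order.TTheory GRing.Theory Num.Theory.
Local Open Scope ring_scope.

Lemma sum4 (R : realFieldType) (F : bool * bool -> R) :
  \sum_(y : bool * bool) F y =
  F (false,false) + F (false,true) + F (true,false) + F (true,true).
Proof.
rewrite (eq_bigr (fun p => F (p.1, p.2))); last by case.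
rewrite -(pair_bigA _ (fun i j => F (i, j))) /= !big_bool /=.
rewrite !addrA; lra.
Qed.

Lemma sumc (R : realFieldType) (P : pred (bool * bool)) (F : bool * bool -> R) :
  \sum_(y : bool * bool | P y) F y =
  (if P (false,false) then F (false,false) else 0) +
  (if P (false,true) then F (false,true) else 0) +
  (if P (true,false) then F (true,false) else 0) +
  (if P (true,true) then F (true,true) else 0).
Proof. by rewrite big_mkcond sum4. Qed.

Definition qq {R : realFieldType} (a b c d : R) (y : bool * bool) : R :=
  match y with
  | (false, false) => a | (false, true) => b
  | (true, false) => c | (true, true) => d end.

Lemma unpack (R : realFieldType) (p0 p1 : R) q : compatible p0 p1 q ->
  [/\ 0 <= q (false,false), 0 <= q (false,true), 0 <= q (true,false),
      0 <= q (true,true) &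
   [/\ q (false,false) + q (false,true) + q (true,false) + q (true,true) = 1,
       q (true,false) + q (true,true) = p0 &
       q (false,true) + q (true,true) = p1]].
Proof.
move=> [[Hn Hs] [H0 H1]].
rewrite sum4 in Hs; rewrite sumc /= in H0; rewrite sumc /= in H1.
split; try exact: Hn; split => //; lra.
Qed.

Lemma probE (R : realFieldType) (q : bool * bool -> R) S :
  prob_ite q S =
  (if ite false false \in S then q (false,false) else 0) +
  (if ite false true \in S then q (false,true) else 0) +
  (if ite true false \in S then q (true,false) else 0) +
  (if ite true true \in S then q (true,true) else 0).
Proof. by rewrite /prob_ite sumc. Qed.

Theorem mainTheorem7 (R : realFieldType) (alpha p0 p1 : R)
  (halpha0 : 0 < alpha) (halpha1 : alpha < 1 / 2)
  (hp0 : 0 <= p0 <= 1) (hp1 : 0 <= p1 <= 1) :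
  (valid_pred_set alpha p0 p1 [:: (-1)%Z; 1%Z] <->
     (1 - alpha <= p1 - p0 \/ 1 - alpha <= p0 - p1))
  /\ (1 - alpha <= p1 - p0 -> valid_pred_set alpha p0 p1 [:: 1%Z])
  /\ (1 - alpha <= p0 - p1 -> valid_pred_set alpha p0 p1 [:: (-1)%Z]).
Proof.
move/andP: hp0 => [h00 h01]; move/andP: hp1 => [h10 h11].
split; [split|split].
- move=> H.
  have [hle|hlt] := lerP p0 p1.
  + left.
    have := H (qq (1 - p1) (p1 - p0) 0 p0).
    rewrite probE /= !(add0r, addr0); apply.
    split; [split|].
    * by case=> [[] []] /=; lra.
    * rewrite sum4 /=; lra.
    * rewrite !sumc /=; split; lra.
  + right.
    have := H (qq (1 - p0) 0 (p0 - p1) p1).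
    rewrite probE /= !(add0r, addr0); apply.
    split; [split|].
    * by case=> [[] []] /=; lra.
    * rewrite sum4 /=; lra.
    * rewrite !sumc /=; split; lra.
- move=> H q /unpack [a b c d [e f g]]; rewrite probE /=; lra.
- move=> H q /unpack [a b c d [e f g]]; rewrite probE /=; lra.
- move=> H q /unpack [a b c d [e f g]]; rewrite probE /=; lra.
Qed.
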